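(* Consider the battery cost-minimization problem described in the context, with fixed data $t_0, T, K, Z, T_c, D$, $C_{\mathrm{ref}}\ge 0$, and let $S_1,S_2,S_3$ be the sets defined in the context. Suppose that at least one of the following holds: (i) $t_0 \in S_1$; or (ii) $S_3$ is empty; or (iii) $t_0 \notin S_1$ (equivalently $t_0\in S_2\cup S_3$), $S_3$ is nonempty, $S_1$ is nonempty, and there exists $t_1 \in S_1$ such that $t_1 < t_3$ for all $t_3 \in S_3$. Then either there is no feasible control, or the only feasible control is $u(t)=0$ for all $t\in[t_0,t_0+T]$.
   Context: Data: a time interval $[t_0,t_0+T]$ with $T>0$; a PV power profile $P_{\mathrm{pv}}(t)\ge 0$ and a (piecewise continuous) load profile $P_{\mathrm{load}}(t)$ on this interval; a time-of-use price $C_g(t)\ge 0$; constants $0<\eta_{\mathrm{pv}}\le 1$, $0<\eta_B\le 1$, $K>0$, $Z>0$, $T_c>0$, $D>0$, and a battery capacity $C_{\mathrm{ref}}\ge 0$. A control is a function $u$ on $[t_0,t_0+T]$; it determines states $E_B(t)$ (battery charge) and $\Delta C(t)$ (cumulative capacity loss) via $E_B(t_0)=0$, $\Delta C(t_0)=0$, $\frac{dE_B}{dt}=u(t)/\eta_B$ if $u(t)<0$ and $\frac{dE_B}{dt}=\eta_B u(t)$ otherwise; $\frac{d\Delta C}{dt}=-Z u(t)/\eta_B$ if $u(t)<0$ and $\frac{d\Delta C}{dt}=0$ otherwise. A control is feasible if for all $t\in[t_0,t_0+T]$: $E_B(t)\ge 0$; $E_B(t)+\Delta C(t)\le C_{\mathrm{ref}}$;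 $\eta_B u(t) T_c+\Delta C(t)\le C_{\mathrm{ref}}$ whenever $u(t)>0$; $-\frac{u(t)}{\eta_B}T_c+\Delta C(t)\le C_{\mathrm{ref}}$ whenever $u(t)<0$; and $P_{\mathrm{load}}(t)-\eta_{\mathrm{pv}}P_{\mathrm{pv}}(t)+u(t)\le D$. The cost of a feasible control is $\int_{t_0}^{t_0+T} C_g(\tau)\big(P_{\mathrm{load}}(\tau)-\eta_{\mathrm{pv}}P_{\mathrm{pv}}(\tau)+u(\tau)\big)\,d\tau + K\,\Delta C(t_0+T)$. Define $S_1=\{t\in[t_0,t_0+T] : D+\eta_{\mathrm{pv}}P_{\mathrm{pv}}(t)-P_{\mathrm{load}}(t)<0\}$, $S_2=\{t\in[t_0,t_0+T] : D+\eta_{\mathrm{pv}}P_{\mathrm{pv}}(t)-P_{\mathrm{load}}(t)=0\}$, $S_3=\{t\in[t_0,t_0+T] : D+\eta_{\mathrm{pv}}P_{\mathrm{pv}}(t)-P_{\mathrm{load}}(t)>0\}$. *)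

(* Defs.v *)
From Stdlib Require Import Reals List.
Open Scope R_scope.

Definition in_horizon (t0 T t : R) : Prop := t0 <= t <= t0 + T.

Definition has_deriv_within (f : R -> R) (a b x l : R) : Prop :=
  limit1_in (fun y => (f y - f x) / (y - x))
            (fun y => a <= y <= b /\ y <> x) l x.

Definition piecewise_continuous (f : R -> R) (a b : R) : Prop :=
  exists l : list R,
    (forall x, a <= x <= b -> ~ In x l ->
        limit1_in f (fun y => a <= y <= b) (f x) x) /\
    (forall x, In x l -> a <= x <= b ->
        (x < b -> exists L, limit1_in f (fun y => x < y <= b) L x) /\
        (a < x -> exists L, limit1_in f (fun y => a <= y < x) L x)).

Definition rate_EB (etaB v : R) : R :=
  if Rlt_dec v 0 then v / etaB else etaB * v.
Definition rate_dC (Z etaB v : R) : R :=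
  if Rlt_dec v 0 then - Z * v / etaB else 0.

Definition feasible (t0 T : R) (Ppv Pload : R -> R)
    (eta_pv etaB Z Tc D Cref : R) (u : R -> R) : Prop :=
  exists EB dC : R -> R,
    EB t0 = 0 /\ dC t0 = 0 /\
    (forall t, in_horizon t0 T t ->
        has_deriv_within EB t0 (t0 + T) t (rate_EB etaB (u t)) /\
        has_deriv_within dC t0 (t0 + T) t (rate_dC Z etaB (u t))) /\
    (forall t, in_horizon t0 T t ->
        0 <= EB t /\
        EB t + dC t <= Cref /\
        (u t > 0 -> etaB * u t * Tc + dC t <= Cref) /\
        (u t < 0 -> - (u t / etaB) * Tc + dC t <= Cref) /\
        Pload t - eta_pv * Ppv t + u t <= D).

Definition margin (Ppv Pload : R -> R) (eta_pv D t : R) : R :=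
  D + eta_pv * Ppv t - Pload t.
Definition S1 t0 T Ppv Pload eta_pv D (t : R) : Prop :=
  in_horizon t0 T t /\ margin Ppv Pload eta_pv D t < 0.
Definition S2 t0 T Ppv Pload eta_pv D (t : R) : Prop :=
  in_horizon t0 T t /\ margin Ppv Pload eta_pv D t = 0.
Definition S3 t0 T Ppv Pload eta_pv D (t : R) : Prop :=
  in_horizon t0 T t /\ margin Ppv Pload eta_pv D t > 0.

(* Main.v *)
Require Import Defs.
From Stdlib Require Import Reals Lra Psatz Classical.
Open Scope R_scope.

Lemma lip_near f a b x l : has_deriv_within f a b x l ->
  exists alp, alp > 0 /\ forall y, a <= y <= b -> Rabs (y - x) < alp ->
    Rabs (f y - f x) <= (Rabs l + 1) * Rabs (y - x).
Proof.
  intro H. unfold has_deriv_within, limit1_in, limit_in in H; simpl in H; unfold R_dist in H.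
  destruct (H 1 Rlt_0_1) as [alp [Ha Hy]]. exists alp; split; auto.
  intros y Hy1 Hy2. destruct (Req_dec y x) as [->|Hne].
  { rewrite !Rminus_diag, Rabs_R0. lra. }
  specialize (Hy y (conj (conj Hy1 Hne) Hy2)).
  assert (Hp : Rabs (y - x) > 0) by (apply Rabs_pos_lt; lra).
  assert (E : f y - f x = ((f y - f x) / (y - x)) * (y - x)) by (field; lra).
  rewrite E, Rabs_mult. apply Rmult_le_compat_r; [lra|].
  pose proof (Rabs_triang_inv ((f y - f x) / (y - x)) l). lra.
Qed.

Lemma deriv_interior f a b x l : has_deriv_within f a b x l -> a < x < b ->
  derivable_pt_lim f x l.
Proof.
  intros H Hx eps Heps.
  unfold has_deriv_within, limit1_in, limit_in in H; simpl in H; unfold R_dist in H.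
  destruct (H eps Heps) as [alp [Ha Hy]].
  assert (Hd : 0 < Rmin alp (Rmin (x - a) (b - x))).
  { repeat apply Rmin_pos; lra. }
  exists (mkposreal _ Hd). intros h Hh Hlt. simpl in Hlt.
  pose proof (Rmin_l alp (Rmin (x - a) (b - x))).
  pose proof (Rmin_r alp (Rmin (x - a) (b - x))).
  pose proof (Rmin_l (x - a) (b - x)). pose proof (Rmin_r (x - a) (b - x)).

  pose proof (Rle_abs h). pose proof (Rle_abs (-h)). rewrite Rabs_Ropp in *.
  specialize (Hy (x + h)). replace (x + h - x) with h in Hy by ring.
  apply Hy. repeat split; try lra.
Qed.

Lemma deriv_zero f a b x l (P : R -> Prop) : has_deriv_within f a b x l ->
  (forall y, P y -> (a <= y <= b /\ y <> x) /\ f y = f x) ->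
  (forall alp, alp > 0 -> exists y, P y /\ Rabs (y - x) < alp) -> l = 0.
Proof.
  intros H HP Had. destruct (Req_dec l 0) as [|Hl]; auto. exfalso.
  unfold has_deriv_within, limit1_in, limit_in in H; simpl in H; unfold R_dist in H.
  destruct (H (Rabs l) (Rabs_pos_lt _ Hl)) as [alp [Ha Hy]].
  destruct (Had alp Ha) as [y [Py Hyx]]. destruct (HP y Py) as [Hd Hf].
  specialize (Hy y (conj Hd Hyx)). rewrite Hf, Rminus_diag in Hy.
  unfold Rdiv in Hy. rewrite Rmult_0_l, Rminus_0_l, Rabs_Ropp in Hy. lra.
Qed.

Lemma zero_on f a b c g : a < c <= b ->
  (forall x, a <= x <= c -> has_deriv_within f a b x (g x)) ->
  (forall x, a <= x <= c -> g x <= 0) -> f a = 0 ->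
  (forall x, a <= x <= c -> 0 <= f x) -> forall x, a <= x <= c -> f x = 0.
Proof.
  intros Hac Hd Hg Hfa Hpos.
  assert (Hint : forall x, a < x < c -> f x = 0).
  { intros x Hx. destruct (Req_dec (f x) 0) as [|Hne]; auto. exfalso.
    assert (Hfx : f x > 0) by (pose proof (Hpos x ltac:(lra)); lra).
    destruct (lip_near _ _ _ _ _ (Hd a ltac:(lra))) as [alp [Ha Hl]].
    set (L := Rabs (g a) + 1).
    assert (HL : L > 0) by (unfold L; pose proof (Rabs_pos (g a)); lra).
    pose proof (Rmin_l alp (Rmin (x - a) (f x / (2 * L)))).
    pose proof (Rmin_r alp (Rmin (x - a) (f x / (2 * L)))).
    pose proof (Rmin_l (x - a) (f x / (2 * L))). pose proof (Rmin_r (x - a) (f x / (2 * L))).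
    set (m := Rmin alp (Rmin (x - a) (f x / (2 * L)))) in *.
    assert (Hm : 0 < m) by (unfold m; repeat apply Rmin_pos; try lra; apply Rdiv_lt_0_compat; lra).
    set (s := a + m / 2).
    assert (Hs1 : Rabs (s - a) = m / 2) by (unfold s; rewrite Rabs_right; lra).
    specialize (Hl s ltac:(unfold s; lra) ltac:(lra)).
    rewrite Hs1, Hfa, Rminus_0_r in Hl.
    assert (Hfs : f s <= L * (m / 2)) by (pose proof (Rle_abs (f s)); unfold L; lra).
    assert (L * (m/2) <= f x / 4).
    { assert (L * m <= L * (f x / (2 * L))) by (apply Rmult_le_compat_l; lra).
      replace (L * (f x / (2 * L))) with (f x / 2) in H3 by (field; lra). lra. }
    destruct (MVT_cor2 f g s x ltac:(unfold s; lra)) as [c' [Hc1 Hc2]].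
    { intros c' Hc'. apply (deriv_interior f a b); [apply Hd|]; unfold s in *; lra. }
    pose proof (Hg c' ltac:(unfold s in *; lra)).
    assert (g c' * (x - s) <= 0) by (unfold s in *; nra).
    lra. }
  intros x Hx. destruct (Req_dec x a) as [->|]; auto.
  destruct (Req_dec x c) as [->|]; [|apply Hint; lra].
  destruct (Req_dec (f c) 0) as [|Hne]; auto. exfalso.
  assert (Hfx : f c > 0) by (pose proof (Hpos c ltac:(lra)); lra).
  destruct (lip_near _ _ _ _ _ (Hd c ltac:(lra))) as [alp [Ha Hl]].
  set (L := Rabs (g c) + 1).
  assert (HL : L > 0) by (unfold L; pose proof (Rabs_pos (g c)); lra).
  pose proof (Rmin_l alp (Rmin (c - a) (f c / (2 * L)))).
  pose proof (Rmin_r alp (Rmin (c - a) (f c / (2 * L)))).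
  pose proof (Rmin_l (c - a) (f c / (2 * L))). pose proof (Rmin_r (c - a) (f c / (2 * L))).
  set (m := Rmin alp (Rmin (c - a) (f c / (2 * L)))) in *.
  assert (Hm : 0 < m) by (unfold m; repeat apply Rmin_pos; try lra; apply Rdiv_lt_0_compat; lra).
  set (s := c - m / 2).
  assert (Hs1 : Rabs (s - c) = m / 2) by (unfold s; rewrite Rabs_left; lra).
  specialize (Hl s ltac:(unfold s; lra) ltac:(lra)).
  rewrite Hs1, (Hint s ltac:(unfold s; lra)), Rminus_0_l, Rabs_Ropp in Hl.
  assert (H5 : L * m <= L * (f c / (2 * L))) by (apply Rmult_le_compat_l; lra).
  replace (L * (f c / (2 * L))) with (f c / 2) in H5 by (field; lra).
  rewrite Rabs_right in Hl by lra. unfold L in *. lra.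
Qed.

Lemma neg_start f a b l : has_deriv_within f a b a l -> a < b -> l < 0 -> f a = 0 ->
  exists y, a < y <= b /\ f y < 0.
Proof.
  intros H Hab Hl Hfa.
  unfold has_deriv_within, limit1_in, limit_in in H; simpl in H; unfold R_dist in H.
  destruct (H (- l) ltac:(lra)) as [alp [Ha Hy]].
  set (y := a + Rmin alp (b - a) / 2).
  pose proof (Rmin_l alp (b - a)). pose proof (Rmin_r alp (b - a)).
  assert (0 < Rmin alp (b - a)) by (apply Rmin_pos; lra).
  exists y. split; [unfold y; lra|].
  specialize (Hy y). rewrite Hfa, Rminus_0_r in Hy.
  assert (Hq : f y / (y - a) < 0).
  { assert (Rabs (f y / (y - a) - l) < - l).
    { apply Hy. unfold y; repeat split; try lra. rewrite Rabs_right; lra. }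
    pose proof (Rle_abs (f y / (y - a) - l)). lra. }
  assert (E : f y = f y / (y - a) * (y - a)) by (field; unfold y; lra).
  rewrite E. apply Rmult_neg_pos; [lra | unfold y; lra].
Qed.

Lemma rate_zero e v : 0 < e -> rate_EB e v = 0 -> v = 0.
Proof. unfold rate_EB; intros He H; destruct (Rlt_dec v 0).
  - exfalso. assert (v / e < 0) by (apply Rdiv_neg_pos; lra). lra.
  - destruct (Rmult_integral _ _ H); lra. Qed.

Lemma rate_nonpos e v : 0 < e -> v <= 0 -> rate_EB e v <= 0.
Proof. unfold rate_EB; intros He H; destruct (Rlt_dec v 0).
  - assert (v / e < 0) by (apply Rdiv_neg_pos; lra). lra.
  - replace v with 0 by lra. lra. Qed.

Lemma rate_neg e v : 0 < e -> v < 0 -> rate_EB e v < 0.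
Proof. unfold rate_EB; intros He H; destruct (Rlt_dec v 0).
  - apply Rdiv_neg_pos; lra. - lra. Qed.

Theorem proposition1
  (t0 T : R) (Ppv Pload Cg : R -> R)
  (eta_pv etaB K Z Tc D Cref : R)
  (HT : T > 0)
  (HPpv : forall t, in_horizon t0 T t -> Ppv t >= 0)
  (HPload : piecewise_continuous Pload t0 (t0 + T))
  (HCg : forall t, in_horizon t0 T t -> Cg t >= 0)
  (Hetapv : 0 < eta_pv <= 1) (HetaB : 0 < etaB <= 1)
  (HK : K > 0) (HZ : Z > 0) (HTc : Tc > 0) (HD : D > 0) (HCref : Cref >= 0)
  (Hcase :
     S1 t0 T Ppv Pload eta_pv D t0 \/
     (~ exists t, S3 t0 T Ppv Pload eta_pv D t) \/
     (~ S1 t0 T Ppv Pload eta_pv D t0 /\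
      (exists t, S3 t0 T Ppv Pload eta_pv D t) /\
      (exists t, S1 t0 T Ppv Pload eta_pv D t) /\
      (exists t1, S1 t0 T Ppv Pload eta_pv D t1 /\
         forall t3, S3 t0 T Ppv Pload eta_pv D t3 -> t1 < t3))) :
  (forall u : R -> R, ~ feasible t0 T Ppv Pload eta_pv etaB Z Tc D Cref u) \/
  (feasible t0 T Ppv Pload eta_pv etaB Z Tc D Cref (fun _ => 0) /\
   forall u : R -> R, feasible t0 T Ppv Pload eta_pv etaB Z Tc D Cref u ->
     forall t, in_horizon t0 T t -> u t = 0).
Proof.
  assert (Hle : forall u, feasible t0 T Ppv Pload eta_pv etaB Z Tc D Cref u ->
            forall t, in_horizon t0 T t -> u t <= margin Ppv Pload eta_pv D t).
  { intros u [EB [dC [_ [_ [_ Hc]]]]] t Ht. destruct (Hc t Ht) as [_ [_ [_ [_ H]]]].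
    unfold margin; lra. }
  destruct Hcase as [H1 | [H2 | [Hn [_ [_ [t1 [Ht1 Hlt]]]]]]].
  - left. intros u Hf. pose proof (Hle u Hf) as Hm.
    destruct Hf as [EB [dC [HE0 [_ [Hd Hc]]]]].
    destruct H1 as [Hh Hneg]. pose proof (Hm t0 Hh).
    destruct (neg_start EB t0 (t0 + T) (rate_EB etaB (u t0))) as [y [Hy Hfy]];
      [apply (Hd t0 Hh) | lra | apply rate_neg; lra | auto |].
    destruct (Hc y ltac:(unfold in_horizon; lra)). lra.
  - assert (Hz : forall u, feasible t0 T Ppv Pload eta_pv etaB Z Tc D Cref u ->
              forall t, in_horizon t0 T t -> u t = 0).
    { intros u Hf. pose proof (Hle u Hf) as Hm.
      destruct Hf as [EB [dC [HE0 [_ [Hd Hc]]]]].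
      assert (Hu : forall t, in_horizon t0 T t -> u t <= 0).
      { intros t Ht. pose proof (Hm t Ht). destruct (Rle_dec (margin Ppv Pload eta_pv D t) 0); [lra|].
        exfalso. apply H2. exists t. split; auto. lra. }
      assert (HZ0 : forall x, t0 <= x <= t0 + T -> EB x = 0).
      { apply (zero_on EB t0 (t0 + T) (t0 + T) (fun t => rate_EB etaB (u t))); auto; try lra;
          intros x Hx; [exact (proj1 (Hd x Hx)) | apply rate_nonpos; [lra | apply Hu; exact Hx]
          | exact (proj1 (Hc x Hx))]. }
      intros t Ht. apply (rate_zero etaB); [lra|].
      destruct (Req_dec t t0) as [->|Hne].
      + apply (deriv_zero EB t0 (t0 + T) t0 _ (fun y => t0 < y <= t0 + T)).
        * apply (Hd t0 Ht).
        * intros y Hy. split; [split; lra|]. rewrite HE0. apply HZ0. lra.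
        * intros alp Ha. exists (t0 + Rmin alp T / 2).
          pose proof (Rmin_l alp T). pose proof (Rmin_r alp T).
          assert (0 < Rmin alp T) by (apply Rmin_pos; lra).
          split; [lra|]. rewrite Rabs_right; lra.
      + unfold in_horizon in Ht.
        apply (deriv_zero EB t0 (t0 + T) t _ (fun y => t0 <= y < t)).
        * apply (Hd t Ht).
        * intros y Hy. split; [split; lra|]. rewrite !HZ0; lra.
        * intros alp Ha. exists (t - Rmin alp (t - t0) / 2).
          pose proof (Rmin_l alp (t - t0)). pose proof (Rmin_r alp (t - t0)).
          assert (0 < Rmin alp (t - t0)) by (apply Rmin_pos; lra).
          split; [lra|]. rewrite Rabs_left; lra. }
    destruct (classic (exists u, feasible t0 T Ppv Pload eta_pv etaB Z Tc D Cref u))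
      as [[u Hf] | Hno].
    + right. split; [|exact Hz].
      pose proof (Hz u Hf) as Hu0.
      destruct Hf as [EB [dC [HE0 [HC0 [Hd Hc]]]]].
      exists EB, dC. split; [auto|]. split; [auto|]. split.
      * intros t Ht. rewrite <- (Hu0 t Ht). apply Hd; auto.
      * intros t Ht. pose proof (Hc t Ht) as HH. rewrite (Hu0 t Ht) in HH. exact HH.
    + left. intros u Hf. apply Hno. exists u; auto.
  - left. intros u Hf. pose proof (Hle u Hf) as Hm.
    destruct Hf as [EB [dC [HE0 [_ [Hd Hc]]]]].
    destruct Ht1 as [Hh1 Hneg]. unfold in_horizon in Hh1.
    assert (Ht01 : t0 < t1).
    { destruct (Req_dec t1 t0) as [->|]; [|lra]. exfalso. apply Hn. split; auto. }
    assert (Hu : forall t, t0 <= t <= t1 -> u t <= 0).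
    { intros t Ht. assert (Hth : in_horizon t0 T t) by (unfold in_horizon; lra).
      pose proof (Hm t Hth). destruct (Rle_dec (margin Ppv Pload eta_pv D t) 0); [lra|].
      exfalso. assert (t1 < t) by (apply Hlt; split; auto; lra). lra. }
    assert (HZ0 : forall x, t0 <= x <= t1 -> EB x = 0).
    { apply (zero_on EB t0 (t0 + T) t1 (fun t => rate_EB etaB (u t))); auto; try lra;
        intros x Hx; [exact (proj1 (Hd x ltac:(unfold in_horizon; lra))) | apply rate_nonpos; [lra | apply Hu; exact Hx]
          | exact (proj1 (Hc x ltac:(unfold in_horizon; lra)))]. }
    assert (Hr : rate_EB etaB (u t1) = 0).
    { apply (deriv_zero EB t0 (t0 + T) t1 _ (fun y => t0 <= y < t1)).
      * apply (Hd t1 ltac:(unfold in_horizon; lra)).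
      * intros y Hy. split; [split; lra|]. rewrite !HZ0; lra.
      * intros alp Ha. exists (t1 - Rmin alp (t1 - t0) / 2).
        pose proof (Rmin_l alp (t1 - t0)). pose proof (Rmin_r alp (t1 - t0)).
        assert (0 < Rmin alp (t1 - t0)) by (apply Rmin_pos; lra).
        split; [lra|]. rewrite Rabs_left; lra. }
    apply rate_zero in Hr; [|lra].
    assert (u t1 <= margin Ppv Pload eta_pv D t1) by (apply Hm; unfold in_horizon; lra). lra.
Qed.
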